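(* Let $X$, $Z$ be topological vector spaces, $C\subseteq Z$ a nonempty closed convex cone with $C^-\neq\{0\}$, and $f:X\to\mathcal{F}(Z,C)$ convex. If $f$ is lower continuous at $x_0\in{\rm dom\,} f$, then $f$ is lower lattice-semicontinuous at $x_0$.
   Context: $\mathcal{F}(Z,C)=\{A\subseteq Z\colon A=\operatorname{cl}(A+C)\}$ (empty set included); $C^-=\{z^*\in Z^*\colon z^*(z)\le0\ \forall z\in C\}$; ${\rm dom\,} f=\{x\colon f(x)\neq\emptyset\}$. $f$ is convex iff $tf(x_1)+(1-t)f(x_2)\subseteq f(tx_1+(1-t)x_2)$ for all $x_1,x_2$, $t\in(0,1)$. $f$ is lower continuous at $x_0$ iff for every $z_0\in f(x_0)$ and every neighborhood $V$ of $z_0$ there is a neighborhood $U$ of $x_0$ with $f(x)\cap V\neq\emptyset$ for all $x\in U$. $f$ is lower lattice-semicontinuous at $x_0$ iff $f(x_0)\supseteq\bigcap_{U\in\mathcal{N}(x_0)}\operatorname{cl}\bigcup_{x\in U}f(x)$ ($\mathcal{N}(x_0)$ the neighborhoods of $x_0$); equivalently, for every $z_0\notin f(x_0)$ there exist a neighborhood $U$ of $x_0$ and a neighborhood $V$ of $z_0$ with $z\notin f(x)$ for all $x\in U$, $z\in V$. *)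

(* Defs.v *)
From HB Require Import structures.
From mathcomp Require Import all_boot all_order all_algebra.
From mathcomp Require Import all_classical all_reals all_analysis.
Set Implicit Arguments. Unset Strict Implicit. Unset Printing Implicit Defensive.
Import Order.TTheory GRing.Theory Num.Theory.
Import numFieldTopology.Exports numFieldNormedType.Exports.
Local Open Scope classical_set_scope.
Local Open Scope ring_scope.

Section Defs.
Variable R : realType.

Definition msum (V : lmodType R) (A B : set V) : set V :=
  [set a + b | a in A & b in B].
Definition mscale (V : lmodType R) (t : R) (A : set V) : set V :=
  [set t *: a | a in A].

Definition is_convex_cone (V : lmodType R) (C : set V) : Prop :=
  (forall t c, 0 < t -> C c -> C (t *: c)) /\
  (forall t c1 c2, 0 <= t <= 1 -> C c1 -> C c2 -> C (t *: c1 + (1 - t) *: c2)).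

Definition neg_dual_cone (Z : topologicalLmodType R) (C : set Z) : set (Z -> R) :=
  [set g | (forall (a : R) (u v : Z), g (a *: u + v) = a * g u + g v)
           /\ continuous g /\ (forall z, C z -> g z <= 0)].

Definition in_FZC (Z : topologicalLmodType R) (C : set Z) (A : set Z) : Prop :=
  A = closure (msum A C).

Definition dom (X Z : Type) (f : X -> set Z) : set X := [set x | f x !=set0].

Definition set_convex (X Z : lmodType R) (f : X -> set Z) : Prop :=
  forall x1 x2 (t : R), 0 < t < 1 ->
    msum (mscale t (f x1)) (mscale (1 - t) (f x2)) `<=` f (t *: x1 + (1 - t) *: x2).

Definition lower_continuous_at (X Z : topologicalType) (f : X -> set Z) (x0 : X) :=
  forall z0, f x0 z0 -> forall V, nbhs z0 V ->
    exists2 U, nbhs x0 U & forall x, U x -> f x `&` V !=set0.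

Definition lower_lattice_semicontinuous_at (X Z : topologicalType)
    (f : X -> set Z) (x0 : X) :=
  \bigcap_(U in [set U | nbhs x0 U]) closure (\bigcup_(x in U) f x) `<=` f x0.
End Defs.

(* Main.v *)
Require Import Defs.
From HB Require Import structures.
From mathcomp Require Import all_boot all_order all_algebra.
From mathcomp Require Import all_classical all_reals all_analysis.
From mathcomp Require Import lra ring.
Import Order.TTheory GRing.Theory Num.Theory.
Import numFieldTopology.Exports numFieldNormedType.Exports.
Local Open Scope classical_set_scope.
Local Open Scope ring_scope.
Lemma cvg_lin (R : realType) (Z : topologicalLmodType R) (T : Type) (F : set_system T)
  (FF : Filter F) (a b : T -> R^o) (u v : T -> Z) (a0 b0 : R^o) (u0 v0 : Z) :
  a @ F --> a0 -> b @ F --> b0 -> u @ F --> u0 -> v @ F --> v0 ->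
  (fun x => a x *: u x + b x *: v x) @ F --> a0 *: u0 + b0 *: v0.
Proof.
move=> ha hb hu hv.
apply: (@continuous2_cvg _ _ _ _ _ _ _ _ (fun p q : Z => p + q)).
- exact: (@add_continuous _ (_, _)).
- apply: (@continuous2_cvg _ _ _ _ _ _ _ _ (fun (r : R^o) (z : Z) => r *: z)) => //.
  exact: (@scale_continuous _ _ (_, _)).
- apply: (@continuous2_cvg _ _ _ _ _ _ _ _ (fun (r : R^o) (z : Z) => r *: z)) => //.
  exact: (@scale_continuous _ _ (_, _)).
Qed.
Theorem mainTheorem8 (R : realType) (X Z : topologicalLmodType R) (C : set Z)
  (f : X -> set Z) (x0 : X) :
  C !=set0 -> closed C -> is_convex_cone C ->
  (exists2 g, neg_dual_cone C g & g <> (fun _ => 0)) ->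
  (forall x, in_FZC C (f x)) ->
  set_convex f ->
  dom f x0 ->
  lower_continuous_at f x0 ->
  lower_lattice_semicontinuous_at f x0.
Proof.
move=> _ _ _ _ hFZC hconv [y0 fy0] hlc z0 hz0.
apply: contrapT => nz0.
have cl : closed (f x0) by rewrite (hFZC x0); exact: closed_closure.
have On : nbhs z0 (~` f x0).
  by have := closed_openC cl; rewrite openE => /(_ z0 nz0).
pose h := fun p : R^o * (Z * Z) => p.1 *: p.2.1 + (1 - p.1) *: p.2.2.
have hc : h @ nbhs ((1 : R^o), (z0, y0)) --> (1 : R^o) *: z0 + (1 - 1 : R^o) *: y0.
  apply: cvg_lin.
  - exact: cvg_fst.
  - apply: (@continuous2_cvg _ _ _ _ _ _ _ _ (fun a b : R^o => a - b)).
    + exact: (@sub_continuous _ (_, _)).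
    + exact: cvg_cst.
    + exact: cvg_fst.
  - apply: (@cvg_comp _ _ _ (@snd R^o (Z * Z)) fst _ (nbhs (z0, y0))). exact: cvg_snd. exact: cvg_fst.
  - apply: (@cvg_comp _ _ _ (@snd R^o (Z * Z)) snd _ (nbhs (z0, y0))). exact: cvg_snd. exact: cvg_snd.
rewrite scale1r subrr scale0r addr0 in hc.
move: (hc _ On) => [[B1 B] /= [B1n Bn] sub].
move: Bn => [[V V'] /= [Vn V'n] sub2].
move: B1n => /nbhs_ballP [e /= e0 be].
pose d := Num.min e 1 / 2.
have d0 : 0 < d by rewrite divr_gt0 // lt_min e0 ltr01.
have hm1 : Num.min e 1 <= 1 by rewrite ge_min lexx orbT.
have hme : Num.min e 1 <= e by rewrite ge_min lexx.
have d1 : d < 1 by rewrite /d; lra.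
have de : d < e by rewrite /d; lra.
pose t : R := 1 - d.
have Bt : B1 t by apply: be; rewrite /ball /= /t opprB addrC subrK ger0_norm ?ltW.
have [U' U'n hU'] := hlc y0 fy0 V' V'n.
pose c : R := t / (1 - t).
pose g := fun x : X => (1 + c) *: x0 + (- c) *: x.
have gc : g @ nbhs x0 --> (1 + c : R^o) *: x0 + (- c : R^o) *: x0.
  apply: cvg_lin; [exact: cvg_cst | exact: cvg_cst | exact: cvg_cst | exact: cvg_id].
rewrite -scalerDl addrK scale1r in gc.
have Un := gc _ U'n.
have := hz0 _ Un V Vn.
move=> [z [[x Ux fxz] Vz]].
have [w [fgw V'w]] := hU' _ Ux.
have dn0 : d != 0 by rewrite gt_eqF.
have e1 : (1 - t) * (1 + c) = 1 by rewrite /c /t; field; rewrite opprB addrC subrK.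
have e2 : (1 - t) * (- c) = - t by rewrite /c /t; field; rewrite opprB addrC subrK.
have ex0 : t *: x + (1 - t) *: g x = x0.
  by rewrite /g scalerDr !scalerA e1 e2 scale1r scaleNr addrCA subrr addr0.
have t01 : 0 < t < 1 by rewrite /t; apply/andP; split; lra.
have := hconv x (g x) t t01 (t *: z + (1 - t) *: w).
rewrite ex0 => H.
apply: (sub (t, (z, w)) (conj Bt (sub2 (z, w) (conj Vz V'w)))).
apply: H.
exists (t *: z); first by exists z.
by exists ((1 - t) *: w); first by exists w.
Qed.
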